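(* Let $X,Y$ be complex Banach spaces, $U:X\to Y$ a bounded linear operator with $\|U\|\le\lambda$, $\lambda\ge1$, $1\le p<\infty$, and $Z=(\mathbb C^n,\|\cdot\|)$ a Banach space whose canonical basis is normalized $1$-unconditional. Then $$A_\lambda(B_Z,p,U)\ge\frac{\|Id:Z\to\ell_1^n\|}{n}K_\lambda(B_Z,p,U).$$
   Context: For a complete Reinhardt domain $\Omega\subset\mathbb C^n$ and a bounded holomorphic $f:\Omega\to X$, $f(z)=\sum_\alpha a_\alpha z^\alpha$, $\|f\|_{\Omega,X}=\sup_\Omega\|f(z)\|_X$. $K_\lambda(\Omega,p,U)$ is the supremum of all $r\ge0$ such that $\sup_{z\in r\Omega}\sum_\alpha\|U(a_\alpha)z^\alpha\|_Y^p\le\lambda^p\|f\|_{\Omega,X}^p$ for all bounded holomorphic $f:\Omega\to X$. $A_\lambda(\Omega,p,U)$ is the supremum of $\frac1n\sum_{i=1}^nr_i$ over $r\in\mathbb R^n_{\ge0}$ such that $\sum_\alpha\|U(a_\alpha)\|_Y^pr^{p\alpha}\le\lambda^p\|f\|_{\Omega,X}^p$ for all bounded holomorphic $f:\Omega\to X$. $B_Z$ is the open unit ball of $Z$. *)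

(* Defs.v *)
From HB Require Import structures.
From mathcomp Require Import all_boot all_order all_algebra.
From mathcomp Require Import all_classical all_reals all_analysis.
From mathcomp.real_closed Require Import complex.
Import Order.TTheory GRing.Theory Num.Theory.
Import numFieldNormedType.Exports.

Set Implicit Arguments.
Unset Strict Implicit.
Unset Printing Implicit Defensive.

Local Open Scope classical_set_scope.
Local Open Scope ring_scope.

Section Defs.
Variable R : realType.
Local Notation C := R[i].

(* real-valued norm of a vector in a complex normed space
   (the library norm `|x| takes values in R[i], with zero imaginary part) *)
Definition rnorm (V : normedModType C) (x : V) : R := complex.Re `|x|.

Definition cabs (c : C) : R := complex.Re `|c|.

Variable n : nat.

Definition monom (z : 'I_n -> C) (al : {ffun 'I_n -> nat}) : C :=
  \prod_(i < n) z i ^+ al i.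

Definition rmonom (r : 'I_n -> R) (al : {ffun 'I_n -> nat}) : R :=
  \prod_(i < n) r i ^+ al i.

Definition box_index (N : nat) (b : {ffun 'I_n -> 'I_N.+1}) : {ffun 'I_n -> nat} :=
  [ffun i => nat_of_ord (b i)].

Variable X : completeNormedModType C.

(* partial sum of  sum_alpha a_alpha z^alpha  over the box  alpha_i <= N *)
Definition psum (a : {ffun 'I_n -> nat} -> X) (z : 'I_n -> C) (N : nat) : X :=
  \sum_(b : {ffun 'I_n -> 'I_N.+1}) monom z (box_index b) *: a (box_index b).

Definition fval (a : {ffun 'I_n -> nat} -> X) (z : 'I_n -> C) : X :=
  limn (psum a z).

(* [a] is the family of monomial coefficients of a bounded holomorphic
   function  f : Om -> X  on the complete Reinhardt domain  Om:
   the monomial series converges absolutely at every point of Om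
   and its sum is bounded on Om. *)
Definition bdd_hol (Om : set ('I_n -> C)) (a : {ffun 'I_n -> nat} -> X) : Prop :=
  (forall z, Om z ->
     (\esum_(al in [set: {ffun 'I_n -> nat}])
        ((rnorm (a al) * cabs (monom z al))%:E) < +oo)%E) /\
  exists M : R, forall z, Om z -> rnorm (fval a z) <= M.

Definition supnorm (Om : set ('I_n -> C)) (a : {ffun 'I_n -> nat} -> X) : R :=
  sup [set rnorm (fval a z) | z in Om].

Definition dil (r : R) (Om : set ('I_n -> C)) : set ('I_n -> C) :=
  [set fun i => Complex r 0 * w i | w in Om].

Variable Y : completeNormedModType C.

Definition Kconst (Om : set ('I_n -> C)) (p lam : R) (U : X -> Y) : \bar R :=
  ereal_sup [set r%:E | r in [set r : R | 0 <= r /\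
    forall a, bdd_hol Om a ->
      forall z, dil r Om z ->
        (\esum_(al in [set: {ffun 'I_n -> nat}])
           (((rnorm (U (a al)) * cabs (monom z al)) `^ p)%:E)
         <= ((lam `^ p) * (supnorm Om a `^ p))%:E)%E]].

Definition Aconst (Om : set ('I_n -> C)) (p lam : R) (U : X -> Y) : \bar R :=
  ereal_sup [set ((n%:R)^-1 * \sum_(i < n) r i)%:E | r in
    [set r : 'I_n -> R | (forall i, 0 <= r i) /\
      forall a, bdd_hol Om a ->
        (\esum_(al in [set: {ffun 'I_n -> nat}])
           (((rnorm (U (a al))) `^ p * (rmonom r al) `^ p)%:E)
         <= ((lam `^ p) * (supnorm Om a `^ p))%:E)%E]].

End Defs.

(* A norm on C^n (finite dimensional, hence complete: a Banach space Z) *)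
Definition is_norm (R : realType) (n : nat) (N : ('I_n -> R[i]) -> R) : Prop :=
  (forall z, 0 <= N z) /\
  (forall z, N z = 0 -> z = (fun _ => 0)) /\
  (forall (c : R[i]) z, N (fun i => c * z i) = cabs c * N z) /\
  (forall z w, N (fun i => z i + w i) <= N z + N w).

Definition ebasis (R : realType) (n : nat) (j : 'I_n) : 'I_n -> R[i] :=
  fun i => if i == j then 1 else 0.

Definition normalized_1_unconditional (R : realType) (n : nat)
    (N : ('I_n -> R[i]) -> R) : Prop :=
  (forall j, N (ebasis R j) = 1) /\
  (forall (eps z : 'I_n -> R[i]), (forall i, cabs (eps i) = 1) ->
     N (fun i => eps i * z i) = N z).

Definition unit_ball (R : realType) (n : nat) (N : ('I_n -> R[i]) -> R)
  : set ('I_n -> R[i]) := [set z | N z < 1].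

Definition id_to_l1 (R : realType) (n : nat) (N : ('I_n -> R[i]) -> R) : R :=
  sup [set \sum_(i < n) cabs (z i) | z in [set z | N z <= 1]].

(* Main.v *)
Require Import Defs.
From HB Require Import structures.
From mathcomp Require Import all_boot all_order all_algebra.
From mathcomp Require Import all_classical all_reals all_analysis.
From mathcomp.real_closed Require Import complex.
From mathcomp Require Import ring lra.
Import Order.TTheory GRing.Theory Num.Theory.
Import numFieldNormedType.Exports.
Local Open Scope classical_set_scope.
Local Open Scope ring_scope.

Set Implicit Arguments.
Section H.
Variable R : realType.

Lemma cabsE (z : R[i]) : cabs z = Num.sqrt ((complex.Re z)^+2 + (complex.Im z)^+2).
Proof. by rewrite /cabs normc_def. Qed.

Lemma cabs_ge0 (z : R[i]) : 0 <= cabs z.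
Proof. by rewrite cabsE sqrtr_ge0. Qed.

Lemma cabs_mul (x y : R[i]) : cabs (x * y) = cabs x * cabs y.
Proof.
rewrite /cabs normrM; have := normc_def x; have := normc_def y.
by move=> -> ->; rewrite /= !mulr0 subr0.
Qed.

Lemma cabs_real (r : R) : cabs (Complex r 0) = `|r|.
Proof. by rewrite cabsE /= expr0n /= addr0 sqrtr_sqr. Qed.

Lemma cabs_exp (x : R[i]) k : cabs (x ^+ k) = cabs x ^+ k.
Proof.
elim: k => [|k IH]; first by rewrite !expr0 -[1]/(Complex 1 0) cabs_real normr1.
by rewrite !exprS cabs_mul IH.
Qed.

Lemma cabs_nat k : cabs (k%:R : R[i]) = k%:R.
Proof.
rewrite /cabs normr_nat; elim: k => [//|k IH].
rewrite -addn1 !natrD; move: IH; case: (k%:R : R[i]) => a b /= ->; by [].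
Qed.

Lemma rnorm_ge0 (V : normedModType R[i]) (x : V) : 0 <= rnorm x.
Proof. by have := normr_ge0 x; rewrite lecE => /andP[_]. Qed.

Lemma le_from_t (x y : R) : 0 <= x -> (forall t, 0 <= t -> t < 1 -> t * x <= y) -> x <= y.
Proof.
move=> x0 H; rewrite leNgt; apply/negP => yx.
have y0 : 0 <= y by have := H 0 (lexx _) ltr01; rewrite mul0r.
have xp : 0 < x by apply: le_lt_trans yx.
have t0 : 0 <= (x + y) / (2 * x) by rewrite divr_ge0 ?addr_ge0 ?mulr_ge0 // ?ltW.
have t1 : (x + y) / (2 * x) < 1.
  by rewrite ltr_pdivrMr ?mulr_gt0 // mul1r; lra.
have := H _ t0 t1.
have -> : (x + y) / (2 * x) * x = (x + y) / 2.
  by field; rewrite gt_eqF.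
lra.
Qed.

Lemma coord_le (n : nat) (N : ('I_n -> R[i]) -> R) :
  is_norm N -> normalized_1_unconditional N ->
  forall z i, cabs (z i) <= N z.
Proof.
move=> [N0 [_ [NZ ND]]] [Ne Nu] z i.
pose eps := fun j : 'I_n => if j == i then 1 else -1 : R[i].
have he : forall j, cabs (eps j) = 1.
  move=> j; rewrite /eps; case: (j == i).
    by rewrite -[1]/(Complex 1 0) cabs_real normr1.
  by rewrite cabsE /= oppr0 expr0n /= addr0 sqrtr_sqr normrN normr1.
have := ND z (fun j => eps j * z j); rewrite Nu //.
have -> : (fun j => z j + eps j * z j) = (fun j => (2 * z i) * ebasis R i j).
  apply: funext => j; rewrite /eps /ebasis; case: eqP => [->|_].
    by rewrite mulr1 mul1r mulr2n mulrDl mul1r.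
  by rewrite mulr0 mulN1r subrr.
rewrite NZ Ne mulr1 cabs_mul cabs_nat.
lra.
Qed.

Lemma sum_le (n : nat) (N : ('I_n -> R[i]) -> R) :
  is_norm N -> normalized_1_unconditional N ->
  forall z, N z <= 1 -> \sum_(i < n) cabs (z i) <= n%:R.
Proof.
move=> hN hU z z1.
rewrite -[n in n%:R]card_ord -sumr_const.
apply: ler_sum => i _.

apply: le_trans (coord_le hN hU z i) z1.
Qed.

Lemma id_bnd (n : nat) (N : ('I_n -> R[i]) -> R) :
  is_norm N -> normalized_1_unconditional N ->
  has_sup [set \sum_(i < n) cabs (z i) | z in [set z | N z <= 1]].
Proof.
move=> hN hU; split.
  exists 0; exists (fun _ => 0); rewrite /=.
    have [_ [_ [NZ _]]] := hN.
    have := NZ 0 (fun _ => 0); rewrite (cabs_nat 0) mul0r.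
    by move=> ->; rewrite mul0r ler01.
  by rewrite (cabs_nat 0) sumr_const mul0rn.
exists n%:R; move=> _ [z z1 <-]; exact: (sum_le hN hU).
Qed.

Lemma id_ge1 (n : nat) (N : ('I_n -> R[i]) -> R) :
  is_norm N -> normalized_1_unconditional N -> (0 < n)%N -> 1 <= id_to_l1 N.
Proof.
move=> hN hU n0; have [_ ub] := id_bnd hN hU.
have := ub_le_sup ub; apply.
exists (ebasis R (Ordinal n0)); first by rewrite /= (proj1 hU).
rewrite (bigD1 (Ordinal n0)) //= big1 ?addr0.
  by rewrite /ebasis eqxx -[1]/(Complex 1 0) cabs_real normr1.
by move=> i /negbTE; rewrite /ebasis => ->; rewrite (cabs_nat 0).
Qed.


Lemma cabs_prod (n : nat) (f : 'I_n -> R[i]) :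
  cabs (\prod_(i < n) f i) = \prod_(i < n) cabs (f i).
Proof.
apply: (big_morph _ (@cabs_mul) _).
by rewrite (cabs_nat 1).
Qed.

End H.

Theorem mainTheorem17 (R : realType) (X Y : completeNormedModType R[i])
  (U : {linear X -> Y}) (lam p : R) (n : nat) (N : ('I_n -> R[i]) -> R) :
  1 <= lam ->
  (forall x : X, rnorm (U x) <= lam * rnorm x) ->
  1 <= p ->
  (0 < n)%N ->
  is_norm N ->
  normalized_1_unconditional N ->
  (((id_to_l1 N / n%:R)%:E * Kconst (unit_ball N) p lam U)
     <= Aconst (unit_ball N) p lam U)%E.
Proof.
move=> lam1 hUb p1 n0 hN hUnc.
have [_ [_ [NZ _]]] := hN.
set c := id_to_l1 N / n%:R.
have c0 : 0 < c by rewrite divr_gt0 // ?ltr0n // (lt_le_trans ltr01 (id_ge1 hN hUnc n0)).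
rewrite /Kconst -ereal_sup_pZl //.
apply: ge_ereal_sup => _ [_ [r [r0 Hr] <-] <-].
have KC : forall w, N w <= 1 -> forall t, 0 <= t -> t < 1 ->
   ((n%:R^-1 * (r * t * \sum_(i < n) cabs (w i)))%:E <= Aconst (unit_ball N) p lam U)%E.
  move=> w w1 t t0 t1; apply: ereal_sup_ubound.
  exists (fun i => cabs (Complex r 0 * (Complex t 0 * w i))).
    split; first by move=> i; exact: cabs_ge0.
    move=> a ha.
    have hz : dil r (unit_ball N) (fun i => Complex r 0 * (Complex t 0 * w i)).
      exists (fun i => Complex t 0 * w i) => //.
      rewrite /unit_ball /= NZ cabs_real ger0_norm //.
      apply: le_lt_trans t1; rewrite -[leRHS]mulr1; exact: ler_wpM2l.
    apply: le_trans (Hr a ha _ hz); rewrite le_eqVlt; apply/orP; left; apply/eqP; apply: eq_esum => al _.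
    congr (_%:E); rewrite powRM ?rnorm_ge0 ?cabs_ge0 //; congr (_ * _ `^ p).
    rewrite /rmonom /monom cabs_prod; apply: eq_bigr => i _; by rewrite cabs_exp.
  congr (_%:E); congr (_ * _).
  under eq_bigr do rewrite !cabs_mul !cabs_real (ger0_norm r0) (ger0_norm t0).
  by rewrite -big_distrr /= -big_distrr /= mulrA.
have N0 : N (fun _ => 0) <= 1.
  have := NZ 0 (fun _ => 0); rewrite (cabs_nat R 0) mul0r.
  by move=> ->; rewrite ?mul0r ler01.
have A0 := KC _ N0 0 (lexx 0) ltr01.
rewrite mulr0 mul0r mulr0 in A0.
move: KC A0; case: (Aconst (unit_ball N) p lam U) => [a| |] KC A0 //; last first.
  by rewrite leey.
rewrite lee_fin in A0; rewrite lee_fin.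
have [->|rp] : r = 0 \/ 0 < r.
  by move: r0; rewrite le_eqVlt => /orP[/eqP <-|->]; [left|right].
  by rewrite mulr0.
rewrite /c mulrAC ler_pdivrMr ?ltr0n // -ler_pdivlMr //.
have [ne ub] := id_bnd hN hUnc.
apply: ge_sup => //.
move=> _ [w w1 <-].
apply: le_from_t; first by apply: sumr_ge0 => i _; exact: cabs_ge0.
move=> t t0 t1.
have := KC w w1 t t0 t1; rewrite lee_fin mulrC ler_pdivrMr ?ltr0n //.
rewrite ler_pdivlMr //.
move=> h; apply: le_trans h.
by rewrite mulrC mulrA.
Qed.
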